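(* Let $G$ be a graph on $V$, let $W\subseteq V$ be reducible in $G$, and let $W_1,W_2\subseteq V\setminus W$. Then $$\operatorname{rank}_{\Gamma_W(G)}(W_1,W_2)=\operatorname{rank}_G(W\cup W_1,\,W\cup W_2)-\operatorname{rank}_G(W).$$
   Context: A graph means a finite simple graph in which loops are allowed, with adjacency matrix $A$ over $\mathbf F_2$ ($A_{vv}=1$ iff $v$ has a loop). Let $\mathcal V$ be the $\mathbf F_2$-vector space with basis $V$ and $\mathcal E(x,y)=x^TAy$. For $W\subseteq V$, $\langle W\rangle$ is the span of $W$ and $\langle W\rangle^{\perp\mathcal E}=\{x\in\mathcal V:\mathcal E(x,w)=0\ \forall w\in\langle W\rangle\}$. $W$ is reducible in $G$ if $\langle W\rangle+\langle W\rangle^{\perp\mathcal E}=\mathcal V$. For reducible $W$, $\mathcal E^W(x_1,x_2)=\mathcal E(x_1',x_2')$ where $x_i'\in\langle W\rangle^{\perp\mathcal E}$ with $x_i-x_i'\in\langle W\rangle$ (well defined), and the graph reduction $\Gamma_W(G)$ is the graph on $V\setminus W$ in which $v,w$ (possibly equal) are joined iff $\mathcal E^W(v,w)=1$. For a graph $H$ and vertex subsets $W_1,W_2$, $\operatorname{rank}_H(W_1,W_2)$ is the rank over $\mathbf F_2$ of the submatrix of the adjacency matrix of $H$ with rows $W_1$ and columns $W_2$, and $\operatorname{rank}_H(W)=\operatorname{rank}_H(W,W)$. *)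

(* Defs.v *)
From HB Require Import structures.
From mathcomp Require Import all_boot all_order all_algebra.
Set Implicit Arguments. Unset Strict Implicit. Unset Printing Implicit Defensive.
Import GRing.Theory.
Local Open Scope ring_scope.

(* A graph on the finite vertex type V is a symmetric relation adj : rel V;
   loops are allowed (adj v v may be true).  Its adjacency matrix over F_2
   has entry (adj v w)%:R. *)

Definition vec (V : finType) := {ffun V -> 'F_2}.

Definition bvec (V : finType) (v : V) : vec V := [ffun u => (u == v)%:R].

Definition Eform (V : finType) (adj : rel V) (x y : vec V) : 'F_2 :=
  \sum_(v : V) \sum_(w : V) x v * (adj v w)%:R * y w.

Definition span (V : finType) (W : {set V}) : pred (vec V) :=
  [pred x : vec V | [forall v, (v \notin W) ==> (x v == 0)]].

Definition perpE (V : finType) (adj : rel V) (W : {set V}) : pred (vec V) :=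
  [pred x : vec V | [forall y : vec V, (y \in span W) ==> (Eform adj x y == 0)]].

Definition reducible (V : finType) (adj : rel V) (W : {set V}) : Prop :=
  forall x : vec V, exists y z : vec V,
    [/\ y \in span W, z \in perpE adj W & x = y + z].

(* E^W(x1,x2) = E(x1',x2') with x_i' in <W>^perp, x_i - x_i' in <W>
   (well defined for reducible W; stated here with an existential). *)
Definition EW (V : finType) (adj : rel V) (W : {set V}) (x1 x2 : vec V) : bool :=
  [exists x1' : vec V, exists x2' : vec V,
    [&& x1' \in perpE adj W, x2' \in perpE adj W,
        (x1 - x1') \in span W, (x2 - x2') \in span W &
        Eform adj x1' x2' == 1]].

(* Graph reduction Gamma_W(G): graph on V \ W, represented as a relation on V
   that is false whenever an endpoint lies in W. *)
Definition gamma (V : finType) (adj : rel V) (W : {set V}) : rel V :=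
  fun v w => [&& v \notin W, w \notin W & EW adj W (bvec v) (bvec w)].

Definition rankG (V : finType) (adj : rel V) (W1 W2 : {set V}) : nat :=
  \rank (\matrix_(i < #|W1|, j < #|W2|)
           ((adj (enum_val i) (enum_val j))%:R : 'F_2)).

(* Main.v *)
Require Import Defs.
From HB Require Import structures.
From mathcomp Require Import all_boot all_order all_algebra ring.
Import GRing.Theory.
Set Implicit Arguments. Unset Strict Implicit. Unset Printing Implicit Defensive.
Local Open Scope ring_scope.

Section Aux.
Variables (V : finType) (adj : rel V) (adj_sym : symmetric adj).

Definition Amat : 'M['F_2]_#|V| :=
  \matrix_(i, j) (adj (enum_val i) (enum_val j))%:R.

Definition rowsX p (xs : 'I_p -> vec V) : 'M['F_2]_(p, #|V|) :=
  \matrix_(i, k) xs i (enum_val k).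

Definition r2 (x : vec V) : 'rV['F_2]_#|V| := \row_k x (enum_val k).

Lemma sumV (F : V -> 'F_2) : \sum_v F v = \sum_(i < #|V|) F (enum_val i).
Proof. exact: (big_enum_val F). Qed.

Lemma row_rowsX p (xs : 'I_p -> vec V) i : row i (rowsX xs) = r2 (xs i).
Proof. by apply/rowP => k; rewrite !mxE. Qed.

Lemma rowsX_E p q (xs : 'I_p -> vec V) (ys : 'I_q -> vec V) :
  rowsX xs *m Amat *m (rowsX ys)^T = \matrix_(i, j) Eform adj (xs i) (ys j).
Proof.
apply/matrixP => i j; rewrite !mxE /Eform.
rewrite sumV [in RHS]exchange_big sumV /=.
apply: eq_bigr => k _; rewrite !mxE big_distrl /=.
by apply: eq_bigr => l _; rewrite !mxE.
Qed.

Lemma rankG_E (R C : {set V}) :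
  rankG adj R C = \rank (rowsX (fun i : 'I_#|R| => bvec (enum_val i)) *m Amat
                         *m (rowsX (fun j : 'I_#|C| => bvec (enum_val j)))^T).
Proof.
rewrite rowsX_E /rankG; congr (\rank _); apply/matrixP => i j; rewrite !mxE.
rewrite /Eform (bigD1 (enum_val i)) //= [X in _ + X]big1 ?addr0; last first.
  by move=> v /negbTE hv; apply: big1 => w _; rewrite ffunE hv mul0r mul0r.
rewrite (bigD1 (enum_val j)) //= [X in _ + X]big1 ?addr0; last first.
  by move=> w /negbTE hw; rewrite [bvec (enum_val j) w]ffunE hw mulr0.
by rewrite !ffunE !eqxx mul1r mulr1.
Qed.

Lemma EformBl x y z : Eform adj (x - y) z = Eform adj x z - Eform adj y z.
Proof.
rewrite /Eform -sumrB; apply: eq_bigr => v _; rewrite -sumrB.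
by apply: eq_bigr => w _; rewrite !ffunE; ring.
Qed.

Lemma EformC x y : Eform adj x y = Eform adj y x.
Proof.
rewrite /Eform exchange_big; apply: eq_bigr => v _; apply: eq_bigr => w _.
rewrite adj_sym; ring.
Qed.

Lemma EformBr x y z : Eform adj z (x - y) = Eform adj z x - Eform adj z y.
Proof. by rewrite !(EformC z) EformBl. Qed.

Lemma span_sub (S : {set V}) x : x \in Defs.span S ->
  (r2 x <= rowsX (fun i : 'I_#|S| => bvec (enum_val i)))%MS.
Proof.
move=> /forallP hx; apply/submxP.
exists (\row_i x (enum_val i)); apply/rowP => k; rewrite !mxE.
have -> : \sum_j (\row_i x (enum_val i)) 0 j *
   (rowsX (fun i : 'I_#|S| => bvec (enum_val i))) j k =
   \sum_(u in S) x u * (enum_val k == u)%:R.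
  by rewrite [RHS]big_enum_val; apply: eq_bigr => j _; rewrite !mxE ffunE.
rewrite big_mkcond (bigD1 (enum_val k)) //= big1 ?addr0.
  rewrite eqxx mulr1; case: ifP => // h; move: (hx (enum_val k)); rewrite h /= => /eqP ->.
  by [].
by move=> u /negbTE hu; case: ifP => _ //; rewrite eq_sym hu mulr0.
Qed.

Lemma r2B x y : r2 (x - y) = r2 x - r2 y.
Proof. by apply/rowP => k; rewrite !mxE !ffunE. Qed.

Lemma rank_sym p q (X : 'M['F_2]_(p, #|V|)) (Y : 'M['F_2]_(q, #|V|)) :
  \rank (X *m Amat *m Y^T) = \rank (Y *m Amat *m X^T).
Proof.
rewrite -mxrank_tr !trmx_mul trmxK mulmxA; congr (\rank (_ *m _ *m _)).
by apply/matrixP => i j; rewrite !mxE adj_sym.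
Qed.

Lemma rank_eqmx p p' q (X : 'M['F_2]_(p, #|V|)) (X' : 'M['F_2]_(p', #|V|))
  (Y : 'M['F_2]_(q, #|V|)) :
  (X :=: X')%MS -> \rank (X *m Amat *m Y^T) = \rank (X' *m Amat *m Y^T).
Proof. by move=> h; rewrite -!mulmxA (eqmxMr _ h). Qed.


Lemma perp0 (W : {set V}) z y : z \in perpE adj W -> y \in Defs.span W ->
  Eform adj z y = 0.
Proof. by move=> /forallP /(_ y) /implyP h hy; apply/eqP/h. Qed.

Lemma spanB (W : {set V}) x y : x \in Defs.span W -> y \in Defs.span W ->
  x - y \in Defs.span W.
Proof.
move=> /forallP hx /forallP hy; apply/forallP => u; apply/implyP => hu.
move: (hx u) (hy u); rewrite hu /= => /eqP hx' /eqP hy'.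
by rewrite !ffunE hx' hy' subr0.
Qed.

Lemma bvec_span (W : {set V}) w : w \in W -> bvec w \in Defs.span W.
Proof.
move=> hw; apply/forallP => u; apply/implyP => hu; rewrite ffunE.
by case: (eqVneq u w) hu => [->|]; rewrite ?hw.


Qed.

Lemma wd (W : {set V}) a a' b b' c d :
  a \in perpE adj W -> a' \in perpE adj W -> b \in perpE adj W -> b' \in perpE adj W ->
  c - a \in Defs.span W -> c - a' \in Defs.span W ->
  d - b \in Defs.span W -> d - b' \in Defs.span W ->
  Eform adj a b = Eform adj a' b'.
Proof.
move=> ha ha' hb hb' h1 h2 h3 h4.
have s1 : a - a' \in Defs.span W.
  by have := spanB h2 h1; rewrite opprB addrC addrA subrK.
have s2 : b - b' \in Defs.span W.
  by have := spanB h4 h3; rewrite opprB addrC addrA subrK.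
have e1 : Eform adj (a - a') b = 0 by rewrite EformC; exact: (perp0 hb s1).
have e2 : Eform adj a' (b - b') = 0 by exact: (perp0 ha' s2).
move: e1 e2; rewrite EformBl EformBr => /eqP; rewrite subr_eq0 => /eqP ->.
by move/eqP; rewrite subr_eq0 => /eqP.
Qed.

Section Main.
Variables (W : {set V}) (hW : reducible adj W).

Definition pr (v : V) : vec V :=
  odflt 0 [pick z | (z \in perpE adj W) && (bvec v - z \in Defs.span W)].

Lemma pr_spec v : pr v \in perpE adj W /\ bvec v - pr v \in Defs.span W.
Proof.
rewrite /pr; case: pickP => [z /andP [] //|h].
have [y [z [hy hz e]]] := hW (bvec v).
by move: (h z); rewrite hz e addrK hy.
Qed.

Lemma EW_pr v w : EW adj W (bvec v) (bvec w) = (Eform adj (pr v) (pr w) == 1).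
Proof.
have [p1 s1] := pr_spec v; have [p2 s2] := pr_spec w.
apply/existsP/idP.
  move=> [x1 /existsP [x2 /and5P [h1 h2 h3 h4 /eqP h5]]].
  by rewrite -h5 (wd p1 h1 p2 h2 s1 h3 s2 h4).
by move=> h; exists (pr v); apply/existsP; exists (pr w); rewrite p1 p2 s1 s2 h.
Qed.

Definition XS (S : {set V}) := rowsX (fun i : 'I_#|S| => bvec (enum_val i)).
Definition ZS (S : {set V}) := rowsX (fun i : 'I_#|S| => pr (enum_val i)).

Lemma eq_space (W' : {set V}) : W' \subset ~: W ->
  (XS (W :|: W') :=: col_mx (XS W) (ZS W'))%MS.
Proof.
move=> hW'; apply/eqmxP/andP; split.
  apply/row_subP => i; rewrite row_rowsX -addsmxE.
  have : enum_val i \in W :|: W' by apply: enum_valP.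
  rewrite in_setU => /orP [hr|hr].
    by apply: submx_trans (addsmxSl _ _); apply: span_sub; apply: bvec_span.
  have -> : r2 (bvec (enum_val i)) = r2 (bvec (enum_val i) - pr (enum_val i))
     + r2 (pr (enum_val i)) by rewrite r2B subrK.
  apply: addmx_sub_adds; first by apply: span_sub; case: (pr_spec (enum_val i)).
  rewrite -[in pr _](enum_rankK_in hr hr) -(row_rowsX (fun k : 'I_#|W'| => pr (enum_val k))).
  exact: row_sub.
rewrite -addsmxE addsmx_sub; apply/andP; split; apply/row_subP => i;
  rewrite row_rowsX; apply: span_sub.
  by apply: bvec_span; rewrite in_setU enum_valP.
set v := enum_val i.
have hv : v \in W' by apply: enum_valP.
have [_ /forallP s] := pr_spec v.
apply/forallP => u; apply/implyP => hu; move: (s u).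
rewrite in_setU negb_or in hu; case/andP: hu => hu1 hu2.
rewrite hu1 /= !ffunE; have -> : (u == v) = false.
  by apply/negbTE; apply: contraNneq hu2 => ->.
by rewrite add0r oppr_eq0.
Qed.

Lemma F2b (a : 'F_2) : ((a == 1)%:R : 'F_2) = a.
Proof. by apply/val_inj; case: a => [[|[|[]]] ?]. Qed.

Lemma rank_split (W1 W2 : {set V}) : W1 \subset ~: W -> W2 \subset ~: W ->
  rankG adj (W :|: W1) (W :|: W2) =
  (rankG adj W W + \rank (ZS W2 *m Amat *m (ZS W1)^T))%N.
Proof.
move=> h1 h2; rewrite rankG_E -/(XS _) -/(XS _).
rewrite (rank_eqmx _ (eq_space h1)) rank_sym (rank_eqmx _ (eq_space h2)).
rewrite tr_col_mx mul_col_mx mul_col_row.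
have -> : XS W *m Amat *m (ZS W1)^T = 0.
  rewrite rowsX_E; apply/matrixP => i j; rewrite !mxE EformC.
  exact: (perp0 (proj1 (pr_spec _)) (bvec_span (enum_valP _))).
have -> : ZS W2 *m Amat *m (XS W)^T = 0.
  rewrite rowsX_E; apply/matrixP => i j; rewrite !mxE.
  exact: (perp0 (proj1 (pr_spec _)) (bvec_span (enum_valP _))).
by rewrite rank_diag_block_mx rankG_E.
Qed.

End Main.
End Aux.

Theorem mainTheorem3 (V : finType) (adj : rel V) (adj_sym : symmetric adj)
  (W : {set V}) (hW : reducible adj W) (W1 W2 : {set V})
  (hW1 : W1 \subset ~: W) (hW2 : W2 \subset ~: W) :
  (rankG (gamma adj W) W1 W2)%:Z =
  (rankG adj (W :|: W1) (W :|: W2))%:Z - (rankG adj W W)%:Z.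
Proof.
rewrite (rank_split adj_sym hW hW1 hW2) PoszD addrAC subrr add0r.
rewrite rank_sym // rowsX_E /rankG; congr (Posz (\rank _)).
apply/matrixP => i j; rewrite !mxE /gamma.
have -> : enum_val i \notin W.
  by rewrite -in_setC; apply: (subsetP hW1); apply: enum_valP.
have -> : enum_val j \notin W.
  by rewrite -in_setC; apply: (subsetP hW2); apply: enum_valP.
by rewrite /= EW_pr // F2b.
Qed.
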